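(* Let $p=(p_1,\dots,p_d)$ and $q=(q_1,\dots,q_d)$ be probability vectors with all $q_i>0$ and $p_i\ge\tau$ for all $i$, where $0<\tau\le1/3$. Then $$\sum_{i=1}^d(\log p_i-\log q_i)^2\le\frac{12\log(\tau)^2}{\tau}\,\mathrm{KL}(p\|q)+\frac{9}{\tau^2}\,\mathrm{KL}(p\|q)^2,$$ where $\mathrm{KL}(p\|q)=\sum_i p_i\log(p_i/q_i)$. *)

(* Defs.v *)
(* concrete reals R. Vectors in R^d are functions nat -> R,
   of which only the indices 0..d-1 are used. *)
From Stdlib Require Import Reals.
Open Scope R_scope.

Fixpoint sumR (d : nat) (f : nat -> R) : R :=
  match d with
  | O => 0
  | S n => sumR n f + f n
  end.

Definition prob_vec (d : nat) (p : nat -> R) : Prop :=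
  (forall i, (i < d)%nat -> 0 <= p i) /\ sumR d p = 1.

Definition KL (d : nat) (p q : nat -> R) : R :=
  sumR d (fun i => p i * ln (p i / q i)).

(* Main.v *)
Require Import Defs.
From Stdlib Require Import Reals Lra Psatz.
Open Scope R_scope.

Lemma sumR_le d f g : (forall i, (i < d)%nat -> f i <= g i) -> sumR d f <= sumR d g.
Proof. induction d; simpl; intros H; [lra|]. assert (f d <= g d) by (apply H; lia).
assert (sumR d f <= sumR d g) by (apply IHd; intros; apply H; lia). lra. Qed.

Lemma sumR_ext d f g : (forall i, (i < d)%nat -> f i = g i) -> sumR d f = sumR d g.
Proof. induction d; simpl; intros H; [lra|]. rewrite (H d) by lia. rewrite IHd; auto. Qed.

Lemma sumR_lin d a b f g : sumR d (fun i => a * f i + b * g i) = a * sumR d f + b * sumR d g.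
Proof. induction d; simpl; [lra|]. rewrite IHd. lra. Qed.

Lemma sumR_nonneg d f : (forall i, (i < d)%nat -> 0 <= f i) -> 0 <= sumR d f.
Proof. induction d; simpl; intros H; [lra|].
assert (0 <= f d) by (apply H; lia).
assert (0 <= sumR d f) by (apply IHd; intros; apply H; lia). lra. Qed.

Lemma sumR_sq d f : (forall i, (i < d)%nat -> 0 <= f i) -> sumR d (fun i => f i ^ 2) <= (sumR d f) ^ 2.
Proof. induction d; simpl; intros H; [lra|].
assert (0 <= f d) by (apply H; lia).
assert (0 <= sumR d f) by (apply sumR_nonneg; intros; apply H; lia).
assert (sumR d (fun i => f i ^ 2) <= (sumR d f)^2) by (apply IHd; intros; apply H; lia).
assert (0 <= sumR d f * f d) by (apply Rmult_le_pos; auto). simpl in *. nra. Qed.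

Lemma key t : t ^ 2 <= 12 * (exp t - 1 - t) + 9 * (exp t - 1 - t) ^ 2.
Proof.
destruct (Rle_lt_dec (-2) t).
- assert (H := exp_ineq1_le (t/2)).
  assert (E : exp t = exp (t/2) * exp (t/2)) by (rewrite <- exp_plus; f_equal; lra).
  assert (exp t >= (1 + t/2) * (1 + t/2)) by (rewrite E; apply Rmult_ge_compat; lra).
  nra.
- assert (H := exp_ineq1_le t). assert (0 < exp t) by apply exp_pos. nra.
Qed.

Theorem mainTheorem17 (d : nat) (p q : nat -> R) (tau : R) :
  prob_vec d p -> prob_vec d q ->
  (forall i, (i < d)%nat -> 0 < q i) ->
  (forall i, (i < d)%nat -> tau <= p i) ->
  0 < tau -> tau <= 1 / 3 ->
  sumR d (fun i => (ln (p i) - ln (q i)) ^ 2)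
    <= 12 * (ln tau) ^ 2 / tau * KL d p q + 9 / tau ^ 2 * (KL d p q) ^ 2.
Proof.
intros [_ Hp] [_ Hq] Hq0 Hpt Ht0 Ht3.
set (t := fun i => ln (q i) - ln (p i)).
set (f := fun i => exp (t i) - 1 - t i).
assert (Hf0 : forall i, (i < d)%nat -> 0 <= f i).
{ intros i _. unfold f. pose proof (exp_ineq1_le (t i)). lra. }
assert (HKL : KL d p q = sumR d (fun i => p i * f i)).
{ assert (KL d p q = sumR d (fun i => 1 * (p i * f i) + 1 * (p i - q i))).
  { unfold KL. apply sumR_ext. intros i Hi.
    assert (0 < p i) by (specialize (Hpt i Hi); lra).
    assert (0 < q i) by auto.
    unfold Rdiv. rewrite ln_mult, ln_Rinv by (auto; apply Rinv_0_lt_compat; auto).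
    assert (E : exp (t i) = q i / p i).
    { unfold t, Rminus. rewrite exp_plus, exp_Ropp, !exp_ln by auto. reflexivity. }
    unfold f. rewrite E. unfold t. field. lra. }
  rewrite H, sumR_lin.
  assert (sumR d (fun i => p i - q i) = 0).
  { replace (sumR d (fun i => p i - q i)) with (sumR d (fun i => 1 * p i + (-1) * q i))
      by (apply sumR_ext; intros; ring).
    rewrite sumR_lin, Hp, Hq. ring. }
  lra. }
set (S := sumR d f).
assert (HS0 : 0 <= S) by (apply sumR_nonneg; auto).
assert (HtS : tau * S <= KL d p q).
{ rewrite HKL. unfold S. replace (tau * sumR d f) with (tau * sumR d f + 0 * sumR d f) by ring.
  rewrite <- sumR_lin. apply sumR_le. intros i Hi.
  specialize (Hf0 i Hi). specialize (Hpt i Hi). nra. }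
assert (Hlhs : sumR d (fun i => (ln (p i) - ln (q i)) ^ 2) <= 12 * S + 9 * S ^ 2).
{ apply Rle_trans with (sumR d (fun i => 12 * f i + 9 * f i ^ 2)).
  - apply sumR_le. intros i Hi. unfold f.
    replace ((ln (p i) - ln (q i)) ^ 2) with (t i ^ 2) by (unfold t; ring). apply key.
  - rewrite sumR_lin. pose proof (sumR_sq d f Hf0). unfold S in *. lra. }
assert (Hln : ln tau <= -1).
{ destruct (Rle_lt_dec (ln tau) (-1)) as [|Hc]; auto.
  apply exp_increasing in Hc. rewrite exp_ln in Hc by auto.
  replace (-1) with (- (1)) in Hc by ring. rewrite exp_Ropp in Hc. pose proof exp_le_3. pose proof (exp_pos 1).
  assert (/ 3 <= / exp 1) by (apply Rinv_le_contravar; lra). lra. }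
assert (HSK : S <= KL d p q / tau) by (apply Rmult_le_reg_l with tau; auto; field_simplify; lra).
set (K := KL d p q) in *.
assert (0 <= K) by nra.
assert (12 * S <= 12 * ln tau ^ 2 / tau * K).
{ assert (1 <= ln tau ^ 2) by nra.
  assert (0 <= K / tau) by (unfold Rdiv; apply Rmult_le_pos; [lra | apply Rlt_le, Rinv_0_lt_compat; lra]).
  replace (12 * ln tau ^ 2 / tau * K) with (12 * ln tau ^ 2 * (K / tau)) by (field; lra).
  nra. }
assert (9 * S ^ 2 <= 9 / tau ^ 2 * K ^ 2).
{ replace (9 / tau ^ 2 * K ^ 2) with (9 * (K / tau) ^ 2) by (field; lra). nra. }
lra.
Qed.
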